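(* Let $M\in\mathrm{Mat}(d,\mathbb{Z})$ act by $x\mapsto Mx\bmod n$ on $\tilde L_n=(\mathbb{Z}/n\mathbb{Z})^d$, and let $m\ge 0$ be the height of the pretail tree of the fixed point $0$. Then the following are equivalent: (i) all maximal pretails of $0$ have the same length $m$; (ii) $v_i=w_i\neq 0$ for all $0\le i<m$ and $w_i=0$ for all $i\ge m$; (iii) $|\ker(M^{i+1})| = |\ker(M)|\,|\ker(M^i)| = |\ker(M)|^{i+1}$ for all $0\le i<m$, and $|\ker(M^{m+j})|=|\ker(M^m)|$ for all $j\ge 0$. Moreover, $m$ is the smallest integer $m\ge0$ for which there exists $k\ge1$ with $M^{k+m}\equiv M^m\pmod n$, i.e. the maximum of all pretail lengths.
   Context: A point $y$ is periodic if $M^ky\equiv y\pmod n$ for some $k\ge1$. A pretail of a periodic point $y$ is a set $\{x,Mx,\dots,M^jx=y\}$ (mod $n$) in which $y$ is the only periodic point; $j$ is its length. A pretail of $0$ is maximal if it is not contained in any longer pretail of $0$. The pretail tree of $0$ is the rooted tree with root $0$ whose vertices are all points of all pretails of $0$, where $x\ne 0$ is a child of $Mx$. $\ker(M^j)=\{x\in\tilde L_n: M^jx\equiv 0\}$. $v_i$ is the number of vertices of the tree at graph distance $i$ from the root. For $i\ge1$, $w_i$ is the number of vertices at distance $i$ from the root that are not leaves (terminal vertices); $w_0=0$ if the tree is trivial (only the root) and $w_0=1$ otherwise. *)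

(* Defs.v *)
From HB Require Import structures.
From mathcomp Require Import all_boot all_order all_algebra.
From mathcomp Require Import boolp.
Unset Printing Implicit Defensive.
Import Order.TTheory GRing.Theory Num.Theory.
Local Open Scope ring_scope.

Definition Lat (n d : nat) := 'cV['Z_n]_d.

Definition redmx (n : nat) {d : nat} (A : 'M[int]_d) : 'M['Z_n]_d :=
  map_mx (fun z : int => z%:~R) A.

Definition act (n : nat) {d : nat} (M : 'M[int]_d) (x : Lat n d) : Lat n d :=
  redmx n M *m x.

Notation Mit n M k x := (iter k (act n M) x).

Definition periodic (n : nat) {d : nat} (M : 'M[int]_d) (y : Lat n d) : Prop :=
  exists k, (0 < k)%N /\ Mit n M k y = y.

Definition pretail (n : nat) {d : nat} (M : 'M[int]_d) (x : Lat n d) (j : nat)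
  (y : Lat n d) : Prop :=
  [/\ periodic n M y, Mit n M j x = y &
      forall i, (i < j)%N -> ~ periodic n M (Mit n M i x)].

Definition pretail_set (n : nat) {d : nat} (M : 'M[int]_d) (x : Lat n d) (j : nat)
  : {set Lat n d} := [set Mit n M (nat_of_ord i) x | i : 'I_j.+1].

Definition maximal_pretail0 (n : nat) {d : nat} (M : 'M[int]_d) (x : Lat n d)
  (j : nat) : Prop :=
  pretail n M x j 0 /\
  ~ (exists x' j', [/\ pretail n M x' j' 0, (j < j')%N &
                      pretail_set n M x j \subset pretail_set n M x' j']).

Definition in_tree (n : nat) {d : nat} (M : 'M[int]_d) (z : Lat n d) : Prop :=
  exists x j i, [/\ pretail n M x j 0, (i <= j)%N & z = Mit n M i x].

Definition child (n : nat) {d : nat} (M : 'M[int]_d) (x z : Lat n d) : Prop :=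
  [/\ in_tree n M x, in_tree n M z, x <> 0 & act n M x = z].

Definition leaf (n : nat) {d : nat} (M : 'M[int]_d) (z : Lat n d) : Prop :=
  in_tree n M z /\ ~ (exists x, child n M x z).

(* graph distance i from the root 0 in the tree (the path to the root follows
   the parent map x |-> Mx, and 0 is first reached after i steps) *)
Definition at_dist (n : nat) {d : nat} (M : 'M[int]_d) (z : Lat n d) (i : nat) : Prop :=
  [/\ in_tree n M z, Mit n M i z = 0 &
      forall i', (i' < i)%N -> Mit n M i' z <> 0].

Definition tree_v (n : nat) {d : nat} (M : 'M[int]_d) (i : nat) : nat :=
  #|[set z : Lat n d | `[< at_dist n M z i >]]|.

Definition tree_trivial (n : nat) {d : nat} (M : 'M[int]_d) : Prop :=
  #|[set z : Lat n d | `[< in_tree n M z >]]| = 1%N.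

Definition tree_w (n : nat) {d : nat} (M : 'M[int]_d) (i : nat) : nat :=
  if i == 0%N then (if `[< tree_trivial n M >] then 0%N else 1%N)
  else #|[set z : Lat n d | `[< at_dist n M z i /\ ~ leaf n M z >]]|.

Definition tree_height (n : nat) {d : nat} (M : 'M[int]_d) (m : nat) : Prop :=
  (exists z, at_dist n M z m) /\ (forall z i, at_dist n M z i -> (i <= m)%N).

Definition kerM (n : nat) {d : nat} (M : 'M[int]_d) (j : nat) : {set Lat n d} :=
  [set x : Lat n d | redmx n (M ^+ j) *m x == 0].

Definition mx_congr (n : nat) {d : nat} (A B : 'M[int]_d) : Prop :=
  forall i j, (n%:Z %| A i j - B i j)%Z.

(* Main.v *)
Require Import Defs.
From HB Require Import structures.
From mathcomp Require Import all_boot all_order all_algebra.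
From mathcomp Require Import boolp zify.
Import Order.TTheory GRing.Theory Num.Theory.
Local Open Scope ring_scope.

Lemma natZp0 (n k : nat) : (1 < n)%N -> ((k%:R : 'Z_n) == 0) = (n %| k)%N.
Proof.
move=> n1; apply/eqP/idP.
+ move/(congr1 (@nat_of_ord _)); rewrite val_Zp_nat //= => h.
  by apply/dvdnP; exists (k %/ n)%N; rewrite {1}(divn_eq k n) h addn0.
+ move=> /dvdnP [q ->]; apply: val_inj; rewrite /= val_Zp_nat //= modnMl.
  by case: (Zp_trunc n).
Qed.

Lemma intZp0 (n : nat) (z : int) : (1 < n)%N -> ((z%:~R : 'Z_n) == 0) = (n%:Z %| z)%Z.
Proof.
move=> n1; rewrite dvdzE /=; case: z => k /=.
- by rewrite -pmulrn natZp0.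
- by rewrite NegzE mulrNz oppr_eq0 -pmulrn natZp0.
Qed.

Section Basic.
Variables (n d : nat) (M : 'M[int]_d).
Local Notation f := (act n M).
Local Notation it k x := (iter k (act n M) x).
Local Notation K i := [set x : Lat n d | iter i (act n M) x == 0].

Lemma itE k x : it k x = redmx n (M ^+ k) *m x.
Proof.
elim: k => [|k IH]; first by rewrite expr0 /redmx map_mx1 mul1mx.
by rewrite iterS IH exprS /act /redmx map_mxM mulmxA.
Qed.

Lemma itB k x y : it k (x - y) = it k x - it k y.
Proof. by rewrite !itE mulmxBr. Qed.

Lemma itD k x y : it k (x + y) = it k x + it k y.
Proof. by rewrite !itE mulmxDr. Qed.

Lemma it0 k : it k (0 : Lat n d) = 0.
Proof. by rewrite itE mulmx0. Qed.

Lemma itM a b x : it (a + b) x = it a (it b x).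
Proof. exact: iterD. Qed.

Lemma kerME i : kerM n M i = K i.
Proof. by apply/setP => x; rewrite !inE itE. Qed.

Lemma per_iter y p : it p y = y -> forall t, it (t * p) y = y.
Proof.
move=> e; elim=> [|t IH] //; by rewrite mulSn itM IH e.
Qed.

Lemma per0 y t : periodic n M y -> it t y = 0 -> y = 0.
Proof.
move=> [p [p0 e]] e0.
have le : (t <= t * p)%N by rewrite leq_pmulr.
by rewrite -(@per_iter y p e t) -(subnK le) itM e0 it0.
Qed.

Lemma per_zero : periodic n M 0.
Proof. by exists 1%N; split => //; rewrite it0. Qed.

Lemma exists_dist z k : it k z = 0 ->
  exists i, [/\ it i z = 0, (forall i', (i' < i)%N -> it i' z <> 0) & (i <= k)%N].
Proof.
move=> e.
have ex : exists k, it k z == 0 by exists k; apply/eqP.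
exists (ex_minn ex); case: ex_minnP => i /eqP ei mi; split => //.
- move=> i' lt e'; have := mi i' (introT eqP e'); by rewrite leqNgt lt.
- by apply: mi; apply/eqP.
Qed.

Lemma in_treeP z : in_tree n M z <-> exists k, it k z = 0.
Proof.
split.
- move=> [x [j [i [[_ ej _] lij ->]]]]; exists (j - i)%N.
  by rewrite -itM subnK.
- move=> [k ek]; have [i [ei mi _]] := exists_dist z k ek.
  exists z, i, 0%N; split => //; split => //; first exact: per_zero.
  move=> i' lt per; apply: (mi i' lt).
  apply: (per0 _ (i - i')%N per); by rewrite -itM subnK // ltnW.
Qed.

Lemma at_distP z i : at_dist n M z i <->
  it i z = 0 /\ (forall i', (i' < i)%N -> it i' z <> 0).
Proof.
split; first by case.
move=> [e h]; split => //; apply/in_treeP; by exists i.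
Qed.

Lemma pretail_dist x j : pretail n M x j 0 -> at_dist n M x j.
Proof.
move=> [_ e h]; apply/at_distP; split => // i lt e'.
by apply: (h i lt); rewrite e'; exact: per_zero.
Qed.

Lemma dist_pretail x j : at_dist n M x j -> pretail n M x j 0.
Proof.
move=> /at_distP [e h]; split => //; first exact: per_zero.
move=> i lt per; apply: (h i lt).
apply: (per0 _ (j - i)%N per); by rewrite -itM subnK // ltnW.
Qed.

Lemma child_iff x z : in_tree n M z -> (child n M x z <-> x <> 0 /\ f x = z).
Proof.
move=> tz; split; first by case.
move=> [nx e]; split => //; apply/in_treeP.
move/in_treeP: tz => [k ek]; exists k.+1; by rewrite iterSr e.
Qed.

Lemma nonleafP z : in_tree n M z -> (~ leaf n M z <-> exists x, x <> 0 /\ f x = z).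
Proof.
move=> tz; split.
- move=> nl; case: (EM (exists x, child n M x z)) => [[x /(child_iff x z tz) h]|h].
    by exists x.
  by exfalso; apply: nl.
- move=> [x hx] [_ nl]; apply: nl; exists x; exact/(child_iff x z tz).
Qed.

End Basic.
Arguments itE {n d M}.
Arguments itB {n d M}.
Arguments itD {n d M}.
Arguments it0 {n d M}.
Arguments itM {n d M}.
Arguments kerME {n d M}.
Arguments per_iter {n d M}.
Arguments per0 {n d M}.
Arguments per_zero {n d M}.
Arguments exists_dist {n d M}.
Arguments in_treeP {n d M}.
Arguments at_distP {n d M}.
Arguments pretail_dist {n d M}.
Arguments dist_pretail {n d M}.
Arguments child_iff {n d M}.
Arguments nonleafP {n d M}.

Lemma mx_ext (R : pzSemiRingType) d (B C : 'M[R]_d) :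
  (forall x : 'cV[R]_d, B *m x = C *m x) -> B = C.
Proof.
move=> h; apply/matrixP => i j.
have := h (delta_mx j 0); rewrite -!colE => /matrixP /(_ i 0).
by rewrite !mxE.
Qed.

Lemma congr_redmx n d (A B : 'M[int]_d) : (1 < n)%N ->
  (mx_congr n A B <-> redmx n A = redmx n B).
Proof.
move=> n1; split.
- move=> h; apply/matrixP => i j; rewrite !mxE; apply/eqP.
  by rewrite -subr_eq0 -intrB intZp0 // h.
- move=> /matrixP h i j; have := h i j; rewrite !mxE => /eqP.
  by rewrite -subr_eq0 -intrB intZp0.
Qed.

Section Height.
Variables (n d : nat) (M : 'M[int]_d) (m : nat).
Hypothesis n1 : (1 < n)%N.
Hypothesis Hh : tree_height n M m.
Local Notation f := (act n M).
Local Notation it k x := (iter k (act n M) x).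
Local Notation K i := [set x : Lat n d | iter i (act n M) x == 0].

Lemma distle z i : it i z = 0 -> (forall i', (i' < i)%N -> it i' z <> 0) -> (i <= m)%N.
Proof. move=> e h; apply: (Hh.2 z i); exact/at_distP. Qed.

Lemma Kstab z k : it k z = 0 -> it m z = 0.
Proof.
move=> e; have [i [ei mi _]] := exists_dist z k e.
have le := distle z i ei mi.
by rewrite -(subnK le) itM ei it0.
Qed.

Lemma Kmono z i j : (i <= j)%N -> it i z = 0 -> it j z = 0.
Proof. by move=> le e; rewrite -(subnK le) itM e it0. Qed.

Lemma z0P : exists z0, it m z0 = 0 /\ forall i', (i' < m)%N -> it i' z0 <> 0.
Proof. have [z /at_distP h] := Hh.1; by exists z. Qed.

Lemma chain z0 : it m z0 = 0 -> (forall i', (i' < m)%N -> it i' z0 <> 0) ->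
  forall i, (i <= m)%N -> at_dist n M (it (m - i) z0) i.
Proof.
move=> e h i le; apply/at_distP; split.
- by rewrite -itM subnKC.
- move=> i' lt; rewrite -itM; apply: h.
  lia.
Qed.

Lemma injm u v : it m.+1 u = it m.+1 v -> it m u = it m v.
Proof.
move=> e; apply/eqP; rewrite -subr_eq0 -itB; apply/eqP.
by apply: (Kstab _ m.+1); rewrite itB e subrr.
Qed.

Lemma canc a k : (forall x, it (m + a) x = it (m + (a + k)) x) ->
  forall x, it m x = it (m + k) x.
Proof.
elim: a => [|a IH] h; first by move=> x; have := h x; rewrite !addn0 add0n.
apply: IH => x; rewrite !itM; apply: injm.
rewrite -!itM; have -> : (m.+1 + a = m + a.+1)%N by lia.
have -> : (m + a.+1 + k = m + (a.+1 + k))%N by lia.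
exact: h.
Qed.

Lemma period : exists k, (1 <= k)%N /\ forall x, it (m + k) x = it m x.
Proof.
have [N eN] : exists N, N = #|{: 'M['Z_n]_d}| by eexists.
pose g (i : 'I_N.+1) := redmx n (M ^+ (m + i)).
have [i [j [lt eij]]] : exists i j : 'I_N.+1, (i < j)%N /\ g i = g j.
  case: (boolP [exists i : 'I_N.+1, exists j : 'I_N.+1, (i < j)%N && (g i == g j)]).
    by move/existsP => [i /existsP [j /andP [lt /eqP e]]]; exists i, j.
  move/existsPn => h; exfalso.
  have inj : injective g.
    move=> i j e; apply/val_inj; case: (ltngtP i j) => // lt.
      by have := h i; move/existsPn/(_ j); rewrite lt e eqxx.
    by have := h j; move/existsPn/(_ i); rewrite lt e eqxx.
  by have := leq_card g inj; rewrite card_ord -eN ltnn.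
exists (j - i)%N; split; first by rewrite subn_gt0.
have h : forall y, it (m + i) y = it (m + (i + (j - i))) y.
  move=> y; rewrite (subnKC (ltnW lt)).
  by rewrite !itE -/(g i) -/(g j) eij.
move=> x; exact: (esym (canc i (j - i) h x)).

Qed.

Lemma fD x y : f (x + y) = f x + f y.
Proof. exact: (itD 1). Qed.
Lemma f0 : f 0 = 0.
Proof. exact: (it0 1). Qed.
Lemma fB x y : f (x - y) = f x - f y.
Proof. exact: (itB 1). Qed.

Lemma fit i x : f (it i x) = it i (f x).
Proof. by rewrite -iterS iterSr. Qed.

Lemma iter_per m' k : (forall x, it (k + m') x = it m' x) ->
  forall t x, it (t * k + m') x = it m' x.
Proof.
move=> h; elim=> [|t IH] x; first by rewrite mul0n add0n.
by rewrite mulSn -addnA itM IH -itM h.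
Qed.

Lemma minimal m' k : (1 <= k)%N -> (forall x, it (k + m') x = it m' x) -> (m <= m')%N.
Proof.
move=> k1 h; rewrite leqNgt; apply/negP => lt.
have [z0 [e hz]] := z0P.
apply: (hz m' lt).
rewrite -(iter_per m' k h m z0); apply: (Kmono z0 m (m * k + m') _ e).
have : (m <= m * k)%N by rewrite leq_pmulr.
lia.
Qed.

Lemma pretail_le x j y : pretail n M x j y -> (j <= m)%N.
Proof.
move=> [_ _ h]; rewrite leqNgt; apply/negP => lt.
apply: (h m lt); have [k [k1 hk]] := period.
exists k; split => //; by rewrite -itM addnC hk.
Qed.

Lemma K0 : K 0 = [set 0].
Proof. by apply/setP => x; rewrite !inE. Qed.

Lemma imsub i : f @: K i.+1 \subset K i.
Proof. apply/subsetP => y /imsetP [x]; rewrite !inE => hx ->; rewrite -iterSr; exact: hx. Qed.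

Lemma cardK i : #|K i.+1| = (#|K 1| * #|f @: K i.+1|)%N.
Proof.
rewrite -sum1_card (partition_big_imset f) /= mulnC -sum_nat_const.
apply: eq_bigr => y /imsetP [x0]; rewrite in_set => hx0 ->.
rewrite sum1dep_card.
transitivity #|[set x0 + k | k in K 1]|; last exact: card_imset _ (addrI x0).
apply: eq_card => z; rewrite inE; apply/andP/imsetP.
- move=> [hz /eqP e]; exists (z - x0); last by rewrite addrC subrK.
  by rewrite inE /= fB e subrr.
- move=> [k]; rewrite inE /= => /eqP hk ->; split.
  + have hx0' : it i.+1 x0 = 0 := eqP hx0.
    have h2 : it i.+1 (x0 + k) = 0 by rewrite itD hx0' iterSr hk it0 addr0.
    rewrite inE; apply/eqP; exact: h2.
  + by rewrite fD hk addr0.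
Qed.

Lemma chain_child i : (i < m)%N -> exists w, at_dist n M w i /\ exists u, u <> 0 /\ f u = w.
Proof.
move=> lt; have [z0 [e hz]] := z0P.
exists (it (m - i) z0); split; first by apply: chain => //; exact: ltnW.
exists (it (m - i.+1) z0); split; first by apply: hz; lia.
by rewrite -iterS subnSK.
Qed.

Lemma triv_iff : `[< tree_trivial n M >] = (m == 0)%N.
Proof.
apply/asboolP/eqP.
- move=> tr; apply/eqP; rewrite eqn0Ngt; apply/negP => m0.
  have [z0 [e hz]] := z0P.
  have nz : z0 != 0 by apply/eqP; exact: (hz 0%N m0).
  have sub : [set 0; z0] \subset [set z : Lat n d | `[< in_tree n M z >]].
    apply/subsetP => z; rewrite !inE => /orP [] /eqP ->; apply/asboolP; apply/in_treeP.
    + by exists 0%N.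
    + by exists m.
  have := subset_leq_card sub; rewrite cards2 eq_sym nz.
  by move: tr; rewrite /tree_trivial => ->.
- move=> m0; rewrite /tree_trivial.
  transitivity #|[set (0 : Lat n d)]|; last exact: cards1.
  apply: eq_card => z; rewrite !inE; apply/asboolP/eqP.
  + move=> /in_treeP [k ek]; have := Kstab z k ek; by rewrite m0.
  + by move=> ->; apply/in_treeP; exists 0%N.
Qed.

Lemma w0E : tree_w n M 0 = (if m == 0%N then 0 else 1)%N.
Proof. by rewrite /tree_w eqxx triv_iff. Qed.

Lemma wE i : (0 < i)%N ->
  tree_w n M i = #|[set z : Lat n d | `[< at_dist n M z i /\ ~ leaf n M z >]]|.
Proof. by case: i. Qed.

Lemma Wm i : (m <= i)%N -> tree_w n M i = 0%N.
Proof.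
case: i => [|i] le.
  by rewrite w0E; move: le; rewrite leqn0 => ->.
rewrite wE //; apply/eqP; rewrite cards_eq0; apply/eqP/setP => z; rewrite !inE.
apply/negbTE/asboolP => [[hd nl]].
have tz : in_tree n M z by case: hd.
have [u [u0 fu]] := (nonleafP z tz).1 nl.
have lei := Hh.2 z _ hd.
move/at_distP: hd => [e mi].
apply: (mi i (ltnSn i)).
rewrite -fu -iterSr.
have -> : i.+1 = m by apply/eqP; rewrite eqn_leq lei.
apply: (Kstab u i.+2); by rewrite iterSr fu.
Qed.

Lemma Wnz i : (i < m)%N -> tree_w n M i <> 0%N.
Proof.
case: i => [|i] lt.
  by rewrite w0E; move: lt; rewrite lt0n => /negbTE ->.
rewrite wE //; have [w [hd hu]] := chain_child i.+1 lt.
have hw : w \in [set z : Lat n d | `[< at_dist n M z i.+1 /\ ~ leaf n M z >]].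
  rewrite inE; apply/asboolP; split => //; apply/nonleafP => //; by case: hd.
by move=> c; have := card0_eq c w; rewrite hw inE.
Qed.

Lemma VW0 : (0 < m)%N -> tree_v n M 0 = tree_w n M 0.
Proof.
move=> m0; rewrite w0E; move: m0; rewrite lt0n => /negbTE ->.
rewrite /tree_v.
transitivity #|[set (0 : Lat n d)]|; last exact: cards1.
apply: eq_card => z; rewrite !inE; apply/asboolP/eqP.
- by move/at_distP => [].
- by move=> ->; apply/at_distP; split.
Qed.

Definition Pc := forall i z, (0 < i < m)%N -> at_dist n M z i -> exists u, u <> 0 /\ f u = z.

Lemma P_ii : Pc -> (forall i, (i < m)%N -> tree_v n M i = tree_w n M i /\ tree_w n M i <> 0%N)
                 /\ (forall i, (m <= i)%N -> tree_w n M i = 0%N).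
Proof.
move=> P; split; last exact: Wm.
move=> i lt; split; last exact: Wnz.
case: i lt => [|i] lt; first by apply: VW0; exact: leq_ltn_trans lt.
rewrite wE // /tree_v; apply: eq_card => z; rewrite !inE.
apply/asboolP/asboolP; last by case.
move=> hd; split => //; apply/nonleafP; first by case: hd.
by apply: (P i.+1) => //; rewrite lt.
Qed.

Lemma ii_P : ((forall i, (i < m)%N -> tree_v n M i = tree_w n M i /\ tree_w n M i <> 0%N)
                 /\ (forall i, (m <= i)%N -> tree_w n M i = 0%N)) -> Pc.
Proof.
move=> [h _] i z /andP [i0 lt] hd.
have [e _] := h i lt; move: e; rewrite wE // /tree_v => e.
set V := [set z : Lat n d | _] in e; set W := [set z : Lat n d | _] in e.
have sub : W \subset V by apply/subsetP => y; rewrite !inE => /asboolP [? _]; apply/asboolP.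
have : W == V by rewrite eqEcard sub e leqnn.
move/eqP => eWV.
have : z \in W by rewrite eWV inE; apply/asboolP.
rewrite inE => /asboolP [_ nl]; apply/nonleafP => //; by case: hd.
Qed.

Lemma P_i : Pc -> forall x j, maximal_pretail0 n M x j -> j = m.
Proof.
move=> P x j [pt nmax].
have hd := pretail_dist x j pt.
have le := Hh.2 x j hd.
apply/eqP; rewrite eqn_leq le /=; rewrite leqNgt; apply/negP => lt.
have [u [u0 fu]] : exists u, u <> 0 /\ f u = x.
  case: j hd le lt {pt nmax} => [|j] hd le lt.
    have -> : x = 0 by case/at_distP: hd.
    have [z0 [e hz]] := z0P.
    exists (it m.-1 z0); split; first by apply: hz; rewrite prednK // ltn_pred.
    by rewrite -iterS prednK.
  by apply: (P j.+1) => //; rewrite lt.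
apply: nmax; exists u, j.+1; split => //.
- apply: dist_pretail; apply/at_distP; split.
  + by rewrite iterSr fu; case/at_distP: hd.
  + case=> [|i'] lti; first exact: u0.
    rewrite iterSr fu; case/at_distP: hd => _; apply; exact: lti.
- apply/subsetP => y /imsetP [t _ ->]; apply/imsetP; exists (inord t.+1) => //.
  have ht : (t.+1 < j.+2)%N by rewrite ltnS ltn_ord.
  rewrite (inordK ht) iterSr fu; reflexivity.
Qed.

Lemma i_P : (forall x j, maximal_pretail0 n M x j -> j = m) -> Pc.
Proof.
move=> H i z /andP [i0 lt] hd.
case: (EM (exists u, u <> 0 /\ f u = z)) => // nu; exfalso.
suff : i = m by move=> e; move: lt; rewrite e ltnn.
apply: H; split; first exact: (dist_pretail z i hd).
move=> [x' [j' [pt' lt' sub]]].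
have hd' := pretail_dist x' j' pt'.
have : z \in pretail_set n M x' j'.
  apply: (subsetP sub); apply/imsetP; by exists ord0.
move/imsetP => [t _ ezt].
case/at_distP: hd' => e' m'.
case/at_distP: hd => e mi.
case: t ezt => [[|t] ht] /= ezt.
  by apply: (m' i lt'); rewrite -ezt.
apply: nu; exists (it t x'); split; last by rewrite -iterS ezt.
by apply: m'.
Qed.

Lemma surj_card i : #|K i.+1| = (#|K 1| * #|K i|)%N -> f @: K i.+1 = K i.
Proof.
rewrite cardK => e; apply/eqP; rewrite eqEcard imsub /=.
have p : (0 < #|K 1|)%N by apply/card_gt0P; exists 0; rewrite inE; apply/eqP; exact: f0.
by move: e => /eqP; rewrite eqn_pmul2l // => /eqP ->.
Qed.

Lemma stabK j : #|K (m + j)| = #|K m|.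
Proof.
apply: eq_card => x; rewrite !inE; apply/eqP/eqP.
- exact: Kstab.
- by apply: Kmono; rewrite leq_addr.
Qed.

Lemma P_iii : Pc -> (forall i, (i < m)%N ->
       #|K i.+1| = (#|K 1| * #|K i|)%N /\
       (#|K 1| * #|K i|)%N = (#|K 1| ^ i.+1)%N)
    /\ (forall j, #|K (m + j)| = #|K m|).
Proof.
move=> P; split; last exact: stabK.
have fst1 : forall i, (i < m)%N -> #|K i.+1| = (#|K 1| * #|K i|)%N.
  move=> i lt; rewrite cardK; congr (_ * _)%N.
  suff -> : f @: K i.+1 = K i by [].
  apply/eqP; rewrite eqEcard imsub /=; apply/subset_leq_card/subsetP => y.
  rewrite inE => /eqP ey.
  case: (EM (y = 0)) => [->|y0].
    apply/imsetP; exists 0; last by rewrite f0.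
    rewrite inE; apply/eqP; exact: (it0 i.+1).
  have [i' [ei' mi' le']] := exists_dist y i ey.
  have i'0 : (0 < i')%N by case: i' ei' {mi' le'} => // ei'; exfalso; apply: y0.
  have [u [u0 fu]] : exists u, u <> 0 /\ f u = y.
    apply: (P i'); first by rewrite i'0 /=; exact: leq_ltn_trans le' lt.
    exact/at_distP.
  apply/imsetP; exists u; last by rewrite fu.
  have h3 : it i.+1 u = 0 by rewrite iterSr fu ey.
  rewrite inE; apply/eqP; exact: h3.
elim=> [|i IH] lt.
  split; first exact: fst1.
  by rewrite K0 cards1 muln1 expn1.
split; first exact: fst1.
rewrite (fst1 i (ltnW lt)).
by rewrite (IH (ltnW lt)).2 -expnS.
Qed.

Lemma iii_P : (forall i, (i < m)%N ->
       #|K i.+1| = (#|K 1| * #|K i|)%N /\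
       (#|K 1| * #|K i|)%N = (#|K 1| ^ i.+1)%N) -> Pc.
Proof.
move=> H i z /andP [i0 lt] hd.
have e := surj_card i (H i lt).1.
case/at_distP: hd => ez mi.
have : z \in f @: K i.+1 by rewrite e inE ez.
move/imsetP => [u _ ezu]; exists u; split; last by rewrite ezu.
move=> u0; apply: (mi 0%N i0); change (z = 0); rewrite ezu u0; exact: f0.
Qed.

Lemma main :
  let cond_i := forall x j, maximal_pretail0 n M x j -> j = m in
  let cond_ii := (forall i, (i < m)%N -> tree_v n M i = tree_w n M i /\ tree_w n M i <> 0%N)
                 /\ (forall i, (m <= i)%N -> tree_w n M i = 0%N) in
  let cond_iii :=
    (forall i, (i < m)%N ->
       #|kerM n M i.+1| = (#|kerM n M 1| * #|kerM n M i|)%N /\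
       (#|kerM n M 1| * #|kerM n M i|)%N = (#|kerM n M 1| ^ i.+1)%N)
    /\ (forall j, #|kerM n M (m + j)| = #|kerM n M m|) in
  [/\ (cond_i <-> cond_ii), (cond_ii <-> cond_iii),
      (exists k, (1 <= k)%N /\ mx_congr n (M ^+ (k + m)) (M ^+ m)),
      (forall m', (exists k, (1 <= k)%N /\ mx_congr n (M ^+ (k + m')) (M ^+ m')) ->
                  (m <= m')%N)
    & (forall x j y, pretail n M x j y -> (j <= m)%N)].
Proof.
cbv zeta.
have -> : kerM n M = (fun i => K i) by apply: funext => i; exact: kerME.
split.
- split; [move=> H; apply: P_ii; exact: i_P | move=> H; apply: P_i; exact: ii_P].
- split; [move=> H; apply: P_iii; exact: ii_P | move=> H; apply: P_ii; exact: iii_P H.1].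
- have [k [k1 hk]] := period; exists k; split => //.
  apply/(congr_redmx _ _ _ _ n1); apply: mx_ext => x.
  by rewrite -!itE addnC hk.
- move=> m' [k [k1 /(congr_redmx _ _ _ _ n1) e]]; apply: (minimal m' k k1) => x.
  by rewrite !itE e.
- exact: pretail_le.
Qed.

End Height.

Theorem lemma3p4 (n d : nat) (M : 'M[int]_d) (m : nat) :
  (1 < n)%N ->
  tree_height n M m ->
  let cond_i := forall x j, maximal_pretail0 n M x j -> j = m in
  let cond_ii := (forall i, (i < m)%N -> tree_v n M i = tree_w n M i /\ tree_w n M i <> 0%N)
                 /\ (forall i, (m <= i)%N -> tree_w n M i = 0%N) in
  let cond_iii :=
    (forall i, (i < m)%N ->
       #|kerM n M i.+1| = (#|kerM n M 1| * #|kerM n M i|)%N /\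
       (#|kerM n M 1| * #|kerM n M i|)%N = (#|kerM n M 1| ^ i.+1)%N)
    /\ (forall j, #|kerM n M (m + j)| = #|kerM n M m|) in
  [/\ (cond_i <-> cond_ii), (cond_ii <-> cond_iii),
      (exists k, (1 <= k)%N /\ mx_congr n (M ^+ (k + m)) (M ^+ m)),
      (forall m', (exists k, (1 <= k)%N /\ mx_congr n (M ^+ (k + m')) (M ^+ m')) ->
                  (m <= m')%N)
    & (forall x j y, pretail n M x j y -> (j <= m)%N)].
Proof.
move=> n1 Hh; exact: (@main n d M m n1 Hh).
Qed.
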